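(* Let $(A,\circ)$ be a right normal band and $F$ a proper filter of $A$. Then $\epsilon_F$ is a congruence on $(A,\circ)$, and both $F$ and its complement $A\setminus F$ are unions of $\epsilon_F$-classes.
   Context: A right normal band is a semigroup $(A,\circ)$ with $x\circ x=x$ and $(x\circ y)\circ z=(y\circ x)\circ z$. Define $f\lesssim g$ iff $g\circ f=f$. A filter is a non-empty $F\subseteq A$ with $a\circ b\in F$ for all $a,b\in F$ and such that $a\in F$, $a\lesssim b$ imply $b\in F$; it is proper if $F\ne A$. For a filter $F$, $\epsilon_F=\{(a,b)\in A\times A: e\circ a=e\circ b$ for some $e\in F\}$. *)

(* Defs.v *)
Definition is_right_normal_band {A : Type} (op : A -> A -> A) : Prop :=
  (forall x y z, op (op x y) z = op x (op y z)) /\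
  (forall x, op x x = x) /\
  (forall x y z, op (op x y) z = op (op y x) z).

Definition lesssim {A : Type} (op : A -> A -> A) (f g : A) : Prop := op g f = f.

Definition is_filter {A : Type} (op : A -> A -> A) (F : A -> Prop) : Prop :=
  (exists a, F a) /\
  (forall a b, F a -> F b -> F (op a b)) /\
  (forall a b, F a -> lesssim op a b -> F b).

Definition is_proper_filter {A : Type} (op : A -> A -> A) (F : A -> Prop) : Prop :=
  is_filter op F /\ exists a, ~ F a.

Definition epsilon {A : Type} (op : A -> A -> A) (F : A -> Prop) (a b : A) : Prop :=
  exists e, F e /\ op e a = op e b.

Definition is_congruence {A : Type} (op : A -> A -> A) (R : A -> A -> Prop) : Prop :=
  (forall a, R a a) /\
  (forall a b, R a b -> R b a) /\
  (forall a b c, R a b -> R b c -> R a c) /\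
  (forall a b c d, R a b -> R c d -> R (op a c) (op b d)).

Definition union_of_classes {A : Type} (R : A -> A -> Prop) (S : A -> Prop) : Prop :=
  forall a b, R a b -> S a -> S b.

(* Main.v *)
Require Import Defs.

Theorem proposition3p4 (A : Type) (op : A -> A -> A) (F : A -> Prop) :
  is_right_normal_band op ->
  is_proper_filter op F ->
  is_congruence op (epsilon op F) /\
  union_of_classes (epsilon op F) F /\
  union_of_classes (epsilon op F) (fun a => ~ F a).
Proof.
  intros [As [Id Rn]] [[[x0 Hx0] [Cl Up]] _].
  assert (Sat : forall a b, epsilon op F a b -> F a -> F b).
  { intros a b [e [He Hab]] Ha.
    apply (Up (op e a) b (Cl _ _ He Ha)).
    unfold lesssim.
    rewrite <- As, Rn, <- Hab, As, Id. reflexivity. }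
  assert (Sym : forall a b, epsilon op F a b -> epsilon op F b a).
  { intros a b [e [He H]]. exists e. split; auto. }
  split; [|split].
  - split; [|split; [|split]].
    + intros a. exists x0. auto.
    + exact Sym.
    + intros a b c [e [He H1]] [f [Hf H2]].
      exists (op f e). split; [apply Cl; auto|].
      rewrite !As, H1, <- As, Rn, As, H2, <- As, Rn, As. reflexivity.
    + intros a b c d [e [He H1]] [f [Hf H2]].
      exists (op f e). split; [apply Cl; auto|].
      rewrite !As, <- (As e a c), H1.
      rewrite <- (As f (op e b) c), Rn, (As (op e b) f c), H2.
      rewrite <- (As (op e b) f d), <- Rn, !As. reflexivity.
  - exact Sat.
  - intros a b H Na Fb. apply Na. apply (Sat b a (Sym _ _ H) Fb).
Qed.
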